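(* Let $(a_i)_{i\ge1}$ be a non-decreasing sequence of positive reals with $\sum_i a_i^{-2}<\infty$, let $\mu(\theta)=\sum_i(a_i^2+2\theta)^{-1}$, $\psi(\theta)=\big(\sum_i 2\theta^2(a_i^2+2\theta)^{-2}\big)^{1/2}$, and $\rho(s)=1/\mu^{-1}(s)$ for small $s>0$. Then for every $x\in\mathbb{R}$, \[ \lim_{s\downarrow0}\frac{\psi(\mu^{-1}(s))}{\psi(\mu^{-1}(s+x\rho(s)))}=1. \]
   Context: $\mu^{-1}$ denotes the inverse function of the strictly decreasing function $\mu$ on $(0,\infty)$. *)

(* Defs.v *)
From Stdlib Require Import Reals ClassicalEpsilon.
Open Scope R_scope.

(* The sum of a convergent series (value of the unique limit of partial sums);
   arbitrary (chosen) value if the series diverges. *)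
Definition series_val (f : nat -> R) : R :=
  epsilon (inhabits 0) (fun l => infinite_sum f l).

(* a is indexed from 0 here (a 0 plays the role of a_1). *)
Definition mu (a : nat -> R) (theta : R) : R :=
  series_val (fun i => / (a i ^ 2 + 2 * theta)).

Definition psi (a : nat -> R) (theta : R) : R :=
  sqrt (series_val (fun i => 2 * theta ^ 2 / (a i ^ 2 + 2 * theta) ^ 2)).

(* mu^{-1}(s): the (unique, mu being strictly decreasing) theta > 0 with mu theta = s. *)
Definition mu_inv (a : nat -> R) (s : R) : R :=
  epsilon (inhabits 1) (fun theta => 0 < theta /\ mu a theta = s).

Definition rho (a : nat -> R) (s : R) : R := / mu_inv a s.

(* Main.v *)
Require Import Defs.
From Stdlib Require Import Reals Ranalysis5 Lra Lia Psatz ClassicalEpsilon Arith.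
Open Scope R_scope.


Lemma sv_spec (f : nat -> R) : (exists l, infinite_sum f l) -> infinite_sum f (series_val f).
Proof. intros H. unfold series_val. apply epsilon_spec. exact H. Qed.

Lemma sum_scal (v : nat -> R) c n : sum_f_R0 (fun i => c * v i) n = c * sum_f_R0 v n.
Proof. rewrite scal_sum. apply sum_eq. intros; ring. Qed.

Lemma is_scal (v : nat -> R) (c l : R) : infinite_sum v l -> infinite_sum (fun i => c * v i) (c * l).
Proof.
  intros H eps He.
  destruct (Req_dec c 0) as [Hc|Hc].
  - exists 0%nat. intros n _. subst c. unfold Rdist.
    rewrite sum_scal. replace (0 * sum_f_R0 v n - 0 * l) with 0 by ring.
    rewrite Rabs_R0. lra.
  - assert (Hc' : 0 < Rabs c) by (apply Rabs_pos_lt; exact Hc).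
    destruct (H (eps / Rabs c)) as [N HN].
    { apply Rdiv_lt_0_compat; lra. }
    exists N. intros n Hn. specialize (HN n Hn). unfold Rdist in *.
    rewrite sum_scal.
    replace (c * sum_f_R0 v n - c * l) with (c * (sum_f_R0 v n - l)) by ring.
    rewrite Rabs_mult.
    apply (Rmult_lt_compat_l (Rabs c)) in HN; [|lra].
    replace (Rabs c * (eps / Rabs c)) with eps in HN by (field; lra). exact HN.
Qed.

Lemma is_minus (u v : nat -> R) lu lv : infinite_sum u lu -> infinite_sum v lv ->
  infinite_sum (fun i => u i - v i) (lu - lv).
Proof.
  intros Hu Hv eps He.
  destruct (CV_minus _ _ _ _ Hu Hv eps He) as [N HN].
  exists N. intros n Hn. rewrite minus_sum. exact (HN n Hn).
Qed.

Lemma is_ext (u v : nat -> R) l : (forall i, u i = v i) -> infinite_sum u l -> infinite_sum v l.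
Proof.
  intros E Hu eps He. destruct (Hu eps He) as [N HN]. exists N. intros n Hn.
  rewrite <- (sum_eq u v n). exact (HN n Hn). intros; apply E.
Qed.

Lemma is_le (u v : nat -> R) lu lv : infinite_sum u lu -> infinite_sum v lv ->
  (forall i, u i <= v i) -> lu <= lv.
Proof.
  intros Hu Hv H. eapply Rle_cv_lim; [ | exact Hu | exact Hv].
  intros n. apply sum_Rle. intros; apply H.
Qed.

Lemma is_comp (u v : nat -> R) (c : R) : (forall i, 0 <= u i <= c * v i) ->
  (exists l, infinite_sum v l) -> exists l, infinite_sum u l.
Proof.
  intros H [l Hl].
  assert (Hs : {l' | Un_cv (fun N => sum_f_R0 (fun i => c * v i) N) l'}).
  { exists (c * l). apply is_scal. exact Hl. }
  destruct (Rseries_CV_comp u (fun i => c * v i) H Hs) as [l' Hl'].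
  exists l'. exact Hl'.
Qed.

Lemma is_pos_le (u : nat -> R) l N : infinite_sum u l -> (forall i, 0 <= u i) -> sum_f_R0 u N <= l.
Proof. intros; apply sum_incr; auto. Qed.

Lemma div_le (p q r s : R) : 0 < q -> 0 < s -> p * s <= r * q -> p / q <= r / s.
Proof.
  intros Hq Hs H.
  apply (Rmult_le_reg_r (q * s)). nra.
  replace (p / q * (q * s)) with (p * s) by (field; lra).
  replace (r / s * (q * s)) with (r * q) by (field; lra). exact H.
Qed.

Definition U (a : nat -> R) t i := / (a i ^ 2 + 2 * t).
Definition Gf (a : nat -> R) t i := 2 * t ^ 2 / (a i ^ 2 + 2 * t) ^ 2.
Definition W (a : nat -> R) t t' i := / ((a i ^ 2 + 2 * t) * (a i ^ 2 + 2 * t')).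
Definition G a t := series_val (Gf a t).

Lemma a2pos (a : nat -> R) (Hpos : forall i, 0 < a i) i : 0 < a i ^ 2.
Proof. specialize (Hpos i). nra. Qed.

Lemma U_conv a (Hpos : forall i, 0 < a i) (Hsum : exists l, infinite_sum (fun i => / (a i ^ 2)) l)
  t : 0 <= t -> infinite_sum (U a t) (mu a t).
Proof.
  intros Ht. apply (sv_spec (U a t)). apply (is_comp _ (fun i => / (a i ^ 2)) 1 ); [|exact Hsum].
  intros i. unfold U. pose proof (a2pos a Hpos i). split.
  - left. apply Rinv_0_lt_compat. lra.
  - rewrite Rmult_1_l. apply Rinv_le_contravar; lra.
Qed.

Lemma Gf_conv a (Hpos : forall i, 0 < a i) (Hsum : exists l, infinite_sum (fun i => / (a i ^ 2)) l)
  t : 0 < t -> infinite_sum (Gf a t) (G a t).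
Proof.
  intros Ht. apply (sv_spec (Gf a t)). apply (is_comp _ (fun i => / (a i ^ 2)) t); [|exact Hsum].
  intros i. unfold Gf. pose proof (a2pos a Hpos i). set (A := a i ^ 2) in *. clearbody A. split.
  - left. apply Rdiv_lt_0_compat; nra.
  - change (t * / A) with (t / A). apply div_le; [nra|lra|].
    assert (0 <= t * A * A) by (repeat apply Rmult_le_pos; lra).
    assert (0 <= 2 * A * t * t) by (repeat apply Rmult_le_pos; lra).
    assert (0 <= 4 * t * t * t) by (repeat apply Rmult_le_pos; lra).
    simpl. nra.
Qed.

Lemma W_le a (Hpos : forall i, 0 < a i) t t' i : 0 <= t -> 0 < t' ->
  0 < W a t t' i <= / (2 * t') * / (a i ^ 2).
Proof.
  intros Ht Ht'. unfold W. pose proof (a2pos a Hpos i). set (A := a i ^ 2) in *. clearbody A. split.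
  - apply Rinv_0_lt_compat. nra.
  - rewrite <- Rinv_mult. apply Rinv_le_contravar. nra. nra.
Qed.

Lemma W_conv a (Hpos : forall i, 0 < a i) (Hsum : exists l, infinite_sum (fun i => / (a i ^ 2)) l)
  t t' : 0 <= t -> 0 < t' -> infinite_sum (W a t t') (series_val (W a t t')).
Proof.
  intros Ht Ht'. apply sv_spec. apply (is_comp _ (fun i => / (a i ^ 2)) (/ (2 * t'))); [|exact Hsum].
  intros i. destruct (W_le a Hpos t t' i Ht Ht'). lra.
Qed.

Lemma mu_pos a (Hpos : forall i, 0 < a i) (Hsum : exists l, infinite_sum (fun i => / (a i ^ 2)) l)
  t : 0 <= t -> 0 < mu a t.
Proof.
  intros Ht. pose proof (U_conv a Hpos Hsum t Ht) as H.
  pose proof (is_pos_le _ _ 0 H) as H0. simpl in H0.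
  assert (0 < U a t 0). { unfold U. apply Rinv_0_lt_compat. pose proof (a2pos a Hpos 0). lra. }
  assert (U a t 0 <= mu a t); [|lra]. apply H0. intros i. unfold U. left. apply Rinv_0_lt_compat. pose proof (a2pos a Hpos i). lra.
Qed.

Lemma mu_anti a (Hpos : forall i, 0 < a i) (Hsum : exists l, infinite_sum (fun i => / (a i ^ 2)) l)
  t t' : 0 <= t -> t <= t' -> mu a t' <= mu a t.
Proof.
  intros Ht Htt. apply (is_le (U a t') (U a t)).
  apply U_conv; auto; lra. apply U_conv; auto.
  intros i. unfold U. pose proof (a2pos a Hpos i). apply Rinv_le_contravar; lra.
Qed.

Lemma mu_diff a (Hpos : forall i, 0 < a i) (Hsum : exists l, infinite_sum (fun i => / (a i ^ 2)) l)
  t t' : 0 <= t -> 0 < t' -> mu a t - mu a t' = 2 * (t' - t) * series_val (W a t t').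
Proof.
  intros Ht Ht'.
  pose proof (is_minus _ _ _ _ (U_conv a Hpos Hsum t Ht) (U_conv a Hpos Hsum t' (Rlt_le _ _ Ht'))) as H1.
  apply (is_ext _ (fun i => 2 * (t' - t) * W a t t' i)) in H1.
  2:{ intros i. unfold U, W. pose proof (a2pos a Hpos i). field. split; lra. }
  pose proof (is_scal _ (2 * (t' - t)) _ (W_conv a Hpos Hsum t t' Ht Ht')) as H2.
  exact (uniqueness_sum _ _ _ H1 H2).
Qed.

Lemma mu_lip a (Hpos : forall i, 0 < a i) L (HL : infinite_sum (fun i => / (a i ^ 2)) L)
  t t' : 1/2 <= t -> 1/2 <= t' -> Rabs (mu a t - mu a t') <= 2 * L * Rabs (t - t').
Proof.
  intros Ht Ht'. assert (Hsum : exists l, infinite_sum (fun i => / (a i ^ 2)) l) by eauto.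
  rewrite (mu_diff a Hpos Hsum t t'); try lra.
  assert (HW := W_conv a Hpos Hsum t t' ltac:(lra) ltac:(lra)).
  assert (H0 : 0 <= series_val (W a t t')).
  { apply (Rle_trans _ (sum_f_R0 (W a t t') 0)). simpl. left. apply (W_le a Hpos); lra.
    apply is_pos_le; auto. intros i; left; apply (W_le a Hpos); lra. }
  assert (H1 : series_val (W a t t') <= / (2 * t') * L).
  { apply (is_le _ _ _ _ HW (is_scal _ _ _ HL)). intros i. apply (W_le a Hpos); lra. }
  assert (HL0 : 0 <= L).
  { apply (Rle_trans _ (sum_f_R0 (fun i => / (a i ^ 2)) 0)). simpl. left. apply Rinv_0_lt_compat, (a2pos a Hpos).
    apply is_pos_le; auto. intros i; left; apply Rinv_0_lt_compat, (a2pos a Hpos). }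
  assert (Hinv : / (2 * t') <= 1). { rewrite <- Rinv_1. apply Rinv_le_contravar; lra. }
  assert (H2 : series_val (W a t t') <= L). { apply (Rle_trans _ _ _ H1). nra. }
  rewrite !Rabs_mult, (Rabs_pos_eq 2) by lra. rewrite (Rabs_pos_eq (series_val _)) by lra.
  rewrite Rabs_minus_sym. pose proof (Rabs_pos (t - t')). nra.
Qed.

Lemma mu_cont a (Hpos : forall i, 0 < a i) (Hsum : exists l, infinite_sum (fun i => / (a i ^ 2)) l)
  t : 1 <= t -> continuity_pt (mu a) t.
Proof.
  intros Ht. destruct Hsum as [L HL].
  assert (HL0 : 0 <= L).
  { apply (Rle_trans _ (sum_f_R0 (fun i => / (a i ^ 2)) 0)). simpl. left. apply Rinv_0_lt_compat, (a2pos a Hpos).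
    apply is_pos_le; auto. intros i; left; apply Rinv_0_lt_compat, (a2pos a Hpos). }
  unfold continuity_pt, continue_in, limit1_in, limit_in. intros eps He.
  exists (Rmin (1/2) (eps / (2 * L + 1))). split.
  { apply Rmin_pos. lra. apply Rdiv_lt_0_compat; lra. }
  intros y [_ Hy]. simpl in *. unfold Rdist in *.
  assert (Hy1 : Rabs (y - t) < 1/2) by (eapply Rlt_le_trans; [exact Hy| apply Rmin_l]).
  assert (Hy2 : Rabs (y - t) < eps / (2 * L + 1)) by (eapply Rlt_le_trans; [exact Hy| apply Rmin_r]).
  assert (1/2 <= y). { apply Rabs_def2 in Hy1. lra. }
  eapply Rle_lt_trans. apply (mu_lip a Hpos L HL); lra.
  apply (Rmult_lt_compat_l (2 * L + 1)) in Hy2; [|lra].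
  replace ((2 * L + 1) * (eps / (2 * L + 1))) with eps in Hy2 by (field; lra).
  pose proof (Rabs_pos (y - t)). nra.
Qed.

Lemma mu_small a (Hpos : forall i, 0 < a i) (Hsum : exists l, infinite_sum (fun i => / (a i ^ 2)) l)
  s : 0 < s -> exists T, 1 <= T /\ mu a T < s.
Proof.
  intros Hs. destruct Hsum as [L HL].
  set (v := fun i => / (a i ^ 2)) in *.
  assert (Hv : forall i, 0 <= v i). { intros i; left; apply Rinv_0_lt_compat, (a2pos a Hpos). }
  destruct (HL (s/2) ltac:(lra)) as [K HK]. specialize (HK K (le_n K)). unfold Rdist in HK.
  assert (HPK : sum_f_R0 v K <= L) by (apply is_pos_le; auto).
  set (T := (INR K + 1) / s + 1).
  assert (HT1 : 1 <= T). { unfold T. pose proof (pos_INR K). assert (0 < (INR K + 1)/s) by (apply Rdiv_lt_0_compat; lra). lra. }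
  exists T. split; auto.
  assert (HUle : forall i, U a T i <= / (2 * T) /\ U a T i <= v i).
  { intros i. unfold U, v. pose proof (a2pos a Hpos i). split; apply Rinv_le_contravar; lra. }
  set (B := / (2 * T) * INR (S K) + (L - sum_f_R0 v K)).
  assert (Hb : forall n, sum_f_R0 (U a T) n <= B).
  { intros n. unfold B. destruct (le_lt_dec n K) as [Hn|Hn].
    - apply (Rle_trans _ (sum_f_R0 (fun _ => / (2 * T)) n)).
      apply sum_Rle; intros; apply HUle.
      rewrite sum_cte. assert (INR (S n) <= INR (S K)) by (apply le_INR; lia).
      assert (0 < / (2 * T)) by (apply Rinv_0_lt_compat; lra). nra.
    - rewrite (tech2 _ K n Hn).
      apply Rplus_le_compat.
      + apply (Rle_trans _ (sum_f_R0 (fun _ => / (2 * T)) K)).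
        apply sum_Rle; intros; apply HUle. rewrite sum_cte. lra.
      + apply (Rle_trans _ (sum_f_R0 (fun i => v (S K + i)%nat) (n - S K))).
        apply sum_Rle; intros; apply HUle.
        assert (sum_f_R0 v n <= L) by (apply is_pos_le; auto).
        rewrite (tech2 v K n Hn) in H. lra. }
  assert (HmuB : mu a T <= B).
  { assert (HU := U_conv a Hpos (ex_intro _ L HL) T ltac:(lra)).
    eapply Rle_cv_lim; [ | exact HU | ].
    2:{ intros eps He. exists 0%nat. intros. unfold Rdist. rewrite Rminus_diag, Rabs_R0. exact He. }
    intros n. apply Hb. }
  assert (/ (2 * T) * INR (S K) < s / 2).
  { rewrite S_INR. pose proof (pos_INR K).
    assert (HsT : s * T = INR K + 1 + s) by (unfold T; field; lra).
    apply (Rmult_lt_reg_l (2 * T)). lra.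
    replace (2 * T * (/ (2 * T) * (INR K + 1))) with (INR K + 1) by (field; lra).
    nra. }
  apply Rabs_def2 in HK. unfold B in HmuB. lra.
Qed.

Lemma mu_inv_spec a (Hpos : forall i, 0 < a i) (Hsum : exists l, infinite_sum (fun i => / (a i ^ 2)) l)
  s : 0 < s < mu a 1 -> 0 < mu_inv a s /\ mu a (mu_inv a s) = s.
Proof.
  intros Hs. unfold mu_inv. apply epsilon_spec.
  destruct (mu_small a Hpos Hsum s ltac:(lra)) as [T [HT1 HT]].
  assert (HT' : 1 < T). { destruct HT1 as [|<-]; auto. lra. }
  destruct (IVT_interv (fun t => s - mu a t) 1 T) as [z [Hz1 Hz2]].
  - intros b Hb. apply continuity_pt_minus. apply continuity_pt_const. intros ? ?; auto. apply mu_cont; auto; lra.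
  - exact HT'.
  - simpl. lra.
  - simpl. lra.
  - exists z. simpl in Hz2. split; lra.
Qed.

Lemma G_large a (Hpos : forall i, 0 < a i) (Hmono : forall i, a i <= a (S i))
  (Hsum : exists l, infinite_sum (fun i => / (a i ^ 2)) l)
  K t : a K ^ 2 <= t -> 0 < t -> 2 / 9 * INR (S K) <= G a t.
Proof.
  intros HK Ht.
  assert (Hm : forall i, (i <= K)%nat -> a i <= a K).
  { induction K as [|K IH]; intros i Hi.
    - replace i with 0%nat by lia. lra.
    - destruct (Nat.eq_dec i (S K)) as [->|Hne]. lra.
      apply (Rle_trans _ (a K)). apply IH; [|lia]. 
      apply (Rle_trans _ _ _ (Rle_refl _)). pose proof (Hmono K). pose proof (Hpos K). pose proof (Hpos (S K)). nra.
      apply Hmono. }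
  rewrite <- sum_cte.
  apply (Rle_trans _ (sum_f_R0 (Gf a t) K)).
  - apply sum_Rle. intros i Hi. unfold Gf. specialize (Hm i Hi).
    pose proof (Hpos i). pose proof (Hpos K).
    assert (HA : a i ^ 2 <= t) by nra. pose proof (a2pos a Hpos i).
    set (A := a i ^ 2) in *. clearbody A.
    apply div_le; [lra| nra |]. nra.
  - apply is_pos_le. apply Gf_conv; auto. intros i. unfold Gf. pose proof (a2pos a Hpos i). left. apply Rdiv_lt_0_compat; nra.
Qed.

Lemma G_pos a (Hpos : forall i, 0 < a i) (Hsum : exists l, infinite_sum (fun i => / (a i ^ 2)) l)
  t : 0 < t -> 0 < G a t.
Proof.
  intros Ht. pose proof (Gf_conv a Hpos Hsum t Ht) as H.
  assert (Hp : forall i, 0 < Gf a t i). { intros i. unfold Gf. pose proof (a2pos a Hpos i). apply Rdiv_lt_0_compat; nra. }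
  pose proof (is_pos_le _ _ 0 H (fun i => Rlt_le _ _ (Hp i))). simpl in H0. pose proof (Hp 0%nat). lra.
Qed.

Lemma G_le_tmu a (Hpos : forall i, 0 < a i) (Hsum : exists l, infinite_sum (fun i => / (a i ^ 2)) l)
  t : 0 < t -> G a t <= t * mu a t.
Proof.
  intros Ht. apply (is_le _ (fun i => t * U a t i) _ _ (Gf_conv a Hpos Hsum t Ht)).
  apply is_scal. apply U_conv; auto; lra.
  intros i. unfold Gf, U. pose proof (a2pos a Hpos i). set (A := a i ^ 2) in *. clearbody A.
  change (t * / (A + 2 * t)) with (t / (A + 2 * t)). apply div_le; [nra|lra|].
  assert (0 <= t * A * (A + 2 * t)) by (repeat apply Rmult_le_pos; lra). nra.
Qed.

Lemma G_cross a (Hpos : forall i, 0 < a i) (Hsum : exists l, infinite_sum (fun i => / (a i ^ 2)) l)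
  t t' : 0 < t -> 0 < t' -> G a t <= 2 * (t * Rmax t t') * series_val (W a t t').
Proof.
  intros Ht Ht'. apply (is_le _ (fun i => 2 * (t * Rmax t t') * W a t t' i) _ _ (Gf_conv a Hpos Hsum t Ht)).
  apply is_scal. apply W_conv; auto; lra.
  intros i. unfold Gf, W. pose proof (a2pos a Hpos i). set (A := a i ^ 2) in *. clearbody A.
  set (M := Rmax t t').
  assert (HM : t * (A + 2 * t') <= M * (A + 2 * t)).
  { unfold M. destruct (Rle_dec t t') as [Hl|Hl].
    - rewrite Rmax_right by lra. nra.
    - rewrite Rmax_left by lra. nra. }
  assert (0 < M) by (unfold M; apply (Rlt_le_trans _ t); [lra|apply Rmax_l]).
  change (2 * (t * M) * / ((A + 2 * t) * (A + 2 * t'))) with (2 * (t * M) / ((A + 2 * t) * (A + 2 * t'))).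
  apply div_le; [nra|nra|].
  assert (0 <= 2 * t * (A + 2 * t)) by nra.
  assert (2 * t * (A + 2 * t) * (t * (A + 2 * t')) <= 2 * t * (A + 2 * t) * (M * (A + 2 * t))) by (apply Rmult_le_compat_l; auto).
  nra.
Qed.

Lemma G_compare a (Hpos : forall i, 0 < a i) (Hsum : exists l, infinite_sum (fun i => / (a i ^ 2)) l)
  t t' e : 0 < t -> 0 < t' -> 0 <= e < 1 -> (1 - e) * t <= t' -> (1 - e) * t' <= t ->
  (1 - e) ^ 2 * G a t <= G a t'.
Proof.
  intros Ht Ht' He H1 H2.
  apply (is_le (fun i => (1 - e) ^ 2 * Gf a t i) _ _ _ (is_scal _ _ _ (Gf_conv a Hpos Hsum t Ht)) (Gf_conv a Hpos Hsum t' Ht')).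
  intros i. unfold Gf. pose proof (a2pos a Hpos i). set (A := a i ^ 2) in *. clearbody A.
  assert (Hf : (1 - e) * (t / (A + 2 * t)) <= t' / (A + 2 * t')).
  { rewrite Rmult_div_assoc. apply div_le; [lra|lra|].
    assert ((1 - e) * t * A <= t' * A) by (apply Rmult_le_compat_r; lra).
    assert ((1 - e) * (t * t') <= t * t') by (assert (0 < t * t') by nra; nra).
    nra. }
  assert (Hf0 : 0 <= (1 - e) * (t / (A + 2 * t))).
  { apply Rmult_le_pos. lra. left; apply Rdiv_lt_0_compat; lra. }
  replace ((1 - e) ^ 2 * (2 * t ^ 2 / (A + 2 * t) ^ 2)) with (2 * ((1 - e) * (t / (A + 2 * t))) ^ 2) by (field; lra).
  replace (2 * t' ^ 2 / (A + 2 * t') ^ 2) with (2 * (t' / (A + 2 * t')) ^ 2) by (field; lra).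
  nra.
Qed.

Theorem mainTheorem12 (a : nat -> R)
  (Hpos : forall i, 0 < a i)
  (Hmono : forall i, a i <= a (S i))
  (Hsum : exists l, infinite_sum (fun i => / (a i ^ 2)) l)
  (x : R) :
  limit1_in
    (fun s => psi a (mu_inv a s) / psi a (mu_inv a (s + x * rho a s)))
    (fun s => 0 < s) 1 0.
Proof.
  unfold limit1_in, limit_in. intros eps Heps.
  set (e := Rmin (1/2) (eps/4)).
  assert (He1 : e <= 1/2) by apply Rmin_l.
  assert (He2 : e <= eps/4) by apply Rmin_r.
  assert (He0 : 0 < e) by (apply Rmin_pos; lra).
  destruct (INR_unbounded (9 / 2 * (Rabs x / e))) as [K HK].
  set (m1 := mu a 1).
  assert (Hm1 : 0 < m1) by (apply mu_pos; auto; lra).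
  set (T := Rmax (Rmax 1 (a K ^ 2)) (2 * Rabs x / m1 + 1)).
  assert (HT1 : 1 <= T) by (unfold T; eapply Rle_trans; [apply Rmax_l|apply Rmax_l]).
  assert (HT2 : a K ^ 2 <= T) by (unfold T; eapply Rle_trans; [apply Rmax_r|apply Rmax_l]).
  assert (HT3 : 2 * Rabs x / m1 + 1 <= T) by (unfold T; apply Rmax_r).
  assert (HmT : 0 < mu a T) by (apply mu_pos; auto; lra).
  assert (HmT1 : mu a T <= m1) by (apply mu_anti; auto; lra).
  exists (Rmin (m1 / 2) (mu a T)). split.
  { apply Rmin_pos; lra. }
  intros s [Hs Hsd]. simpl in Hsd |- *. unfold Rdist in *.
  rewrite Rminus_0_r, Rabs_pos_eq in Hsd by lra.
  assert (Hs1 : s < m1 / 2) by (eapply Rlt_le_trans; [exact Hsd|apply Rmin_l]).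
  assert (Hs2 : s < mu a T) by (eapply Rlt_le_trans; [exact Hsd|apply Rmin_r]).
  destruct (mu_inv_spec a Hpos Hsum s ltac:(fold m1; lra)) as [Hth0 Hth].
  set (th := mu_inv a s) in *.
  assert (HthT : T < th).
  { destruct (Rlt_le_dec T th) as [|Hle]; auto.
    pose proof (mu_anti a Hpos Hsum th T ltac:(lra) Hle). lra. }
  assert (HG : Rabs x / e <= G a th).
  { eapply Rle_trans; [|apply (G_large a Hpos Hmono Hsum K th); lra].
    rewrite S_INR. pose proof (Rabs_pos x). lra. }
  assert (HGp : 0 < G a th) by (apply G_pos; auto).
  assert (Hxe : Rabs x <= e * G a th).
  { apply (Rmult_le_compat_l e) in HG; [|lra]. replace (e * (Rabs x / e)) with (Rabs x) in HG by (field; lra). exact HG. }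
  assert (HxG : Rabs x < G a th) by nra.
  assert (HsG : G a th <= s * th). { rewrite <- Hth. rewrite Rmult_comm. apply G_le_tmu; auto. }
  unfold rho. fold th.
  set (s' := s + x * / th).
  assert (Hs'0 : 0 < s').
  { unfold s'. assert (s * th + x > 0) by (pose proof (Rle_abs (-x)); rewrite Rabs_Ropp in *; lra).
    replace (s + x * / th) with ((s * th + x) / th) by (field; lra).
    apply Rdiv_lt_0_compat; lra. }
  assert (Hxth : Rabs x < th * (m1 / 2)).
  { assert (2 * Rabs x / m1 < th) by lra.
    apply (Rmult_lt_compat_r (m1 / 2)) in H; [|lra].
    replace (2 * Rabs x / m1 * (m1 / 2)) with (Rabs x) in H by (field; lra). exact H. }
  assert (Hs'1 : s' < m1).
  { unfold s'. assert (x * / th < m1 / 2); [|lra].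
    apply (Rmult_lt_reg_l th); [lra|].
    replace (th * (x * / th)) with x by (field; lra). pose proof (Rle_abs x). lra. }
  destruct (mu_inv_spec a Hpos Hsum s' ltac:(fold m1; lra)) as [Hth'0 Hth'].
  set (th' := mu_inv a s') in *.
  set (SW := series_val (W a th th')).
  assert (Hdiff := mu_diff a Hpos Hsum th th' ltac:(lra) Hth'0). fold SW in Hdiff.
  rewrite Hth, Hth' in Hdiff. unfold s' in Hdiff.
  assert (Hid : 2 * th * (th' - th) * SW = - x).
  { apply (Rmult_eq_reg_l (/ th)). 2:{ apply Rinv_neq_0_compat; lra. }
    replace (/ th * (2 * th * (th' - th) * SW)) with (2 * (th' - th) * SW) by (field; lra).
    rewrite <- Hdiff. field. lra. }
  assert (Hcross := G_cross a Hpos Hsum th th' Hth0 Hth'0). fold SW in Hcross.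
  set (M := Rmax th th') in *.
  assert (HM0 : 0 < M) by (unfold M; apply (Rlt_le_trans _ th); [lra|apply Rmax_l]).
  assert (HSW : 0 <= SW).
  { destruct (Rle_dec 0 SW); auto. exfalso. assert (SW < 0) by lra.
    assert (2 * (th * M) * SW < 0). { assert (0 < 2 * (th * M)) by nra. nra. } lra. }
  assert (Hd : Rabs (th' - th) <= e * M).
  { assert (H1 : Rabs (th' - th) * G a th <= Rabs (th' - th) * (2 * (th * M) * SW))
      by (apply Rmult_le_compat_l; [apply Rabs_pos|exact Hcross]).
    assert (H2 : Rabs (th' - th) * (2 * (th * M) * SW) = M * Rabs x).
    { rewrite <- (Rabs_Ropp x), <- Hid. rewrite Rabs_mult, Rabs_mult, Rabs_mult.
      rewrite (Rabs_pos_eq SW), (Rabs_pos_eq th), (Rabs_pos_eq 2) by lra. ring. }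
    assert (H3 : M * Rabs x <= M * (e * G a th)) by (apply Rmult_le_compat_l; lra).
    assert (H4 : Rabs (th' - th) * G a th <= (e * M) * G a th) by lra.
    apply Rmult_le_reg_r in H4; auto. }
  assert (Hr1 : (1 - e) * th <= th' /\ (1 - e) * th' <= th).
  { unfold M in Hd. destruct (Rle_dec th th') as [Hl|Hl].
    - rewrite Rmax_right in Hd by lra. rewrite Rabs_pos_eq in Hd by lra. split; nra.
    - rewrite Rmax_left in Hd by lra. rewrite Rabs_minus_sym, Rabs_pos_eq in Hd by lra. split; nra. }
  destruct Hr1 as [Hr1 Hr2].
  assert (Hc1 := G_compare a Hpos Hsum th th' e Hth0 Hth'0 ltac:(lra) Hr1 Hr2).
  assert (Hc2 := G_compare a Hpos Hsum th' th e Hth'0 Hth0 ltac:(lra) Hr2 Hr1).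
  assert (HGp' : 0 < G a th') by (apply G_pos; auto).
  unfold psi. fold (G a th) (G a th').
  set (p := sqrt (G a th)). set (p' := sqrt (G a th')).
  assert (Hp : 0 < p) by (apply sqrt_lt_R0; auto).
  assert (Hp' : 0 < p') by (apply sqrt_lt_R0; auto).
  assert (Hsq : forall g, 0 <= g -> sqrt ((1 - e) ^ 2 * g) = (1 - e) * sqrt g).
  { intros g Hg. rewrite sqrt_mult by (try apply pow2_ge_0; lra).
    rewrite sqrt_pow2 by lra. reflexivity. }
  assert (Hq1 : (1 - e) * p <= p').
  { unfold p, p'. rewrite <- Hsq by lra. apply sqrt_le_1_alt. exact Hc1. }
  assert (Hq2 : (1 - e) * p' <= p).
  { unfold p, p'. rewrite <- Hsq by lra. apply sqrt_le_1_alt. exact Hc2. }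
  set (q := p / p').
  assert (Hpq : p = q * p') by (unfold q; field; lra).
  rewrite Hpq in Hq1, Hq2.
  assert (Hqa : 1 - e <= q) by nra.
  assert (Hqb : (1 - e) * q <= 1) by nra.
  assert (Hqc : q <= 2) by nra.
  assert (Hqd : e * q <= e * 2) by (apply Rmult_le_compat_l; lra).
  change (Rabs (q - 1) < eps). apply Rabs_def1; lra.
Qed.
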